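(* There exist ternary Euclidean LCD codes with parameters $[20,7,9]$ and $[20,12,6]$.
   Context: A ternary $[n,k,d]$ code is a $k$-dimensional subspace $C\subseteq\mathbb{F}_3^n$ with minimum nonzero Hamming weight $d$; it is Euclidean LCD if $C\cap C^{\perp_E}=\{0\}$, where $C^{\perp_E}$ is the dual with respect to $\langle x,y\rangle_E=\sum x_iy_i$. *)

(* Defs.v *)
(* Ternary linear codes as subspaces of 'rV['F_3]_n,
   represented (mxalgebra style) by a square matrix whose row space is C. *)
From mathcomp Require Import all_boot all_algebra.
Set Implicit Arguments. Unset Strict Implicit. Unset Printing Implicit Defensive.
Import GRing.Theory.
Local Open Scope ring_scope.

Notation F3 := ('F_3 : finFieldType).

Definition in_code n (C : 'M[F3]_n) (x : 'rV[F3]_n) : Prop := (x <= C)%MS.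

Definition hwt n (x : 'rV[F3]_n) : nat := #|[set i : 'I_n | x 0 i != 0]|.

Definition eip n (x y : 'rV[F3]_n) : F3 := \sum_(i < n) x 0 i * y 0 i.

Definition in_eucl_dual n (C : 'M[F3]_n) (x : 'rV[F3]_n) : Prop :=
  forall y, in_code C y -> eip x y = 0.

Definition is_code_nkd n k d (C : 'M[F3]_n) : Prop :=
  \rank C = k /\
  (exists2 x, in_code C x & x != 0 /\ hwt x = d) /\
  (forall x, in_code C x -> x != 0 -> (d <= hwt x)%N).

Definition eucl_LCD n (C : 'M[F3]_n) : Prop :=
  forall x, in_code C x -> in_eucl_dual C x -> x = 0.

(* Main.v *)
Require Import Defs.
From mathcomp Require Import all_boot all_algebra.
Set Implicit Arguments. Unset Strict Implicit. Unset Printing Implicit Defensive.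
Import GRing.Theory.
Local Open Scope ring_scope.

Inductive t3 := T0 | T1 | T2.
Definition t3_eqb (a b : t3) : bool := match a, b with
  T0, T0 | T1, T1 | T2, T2 => true | _, _ => false end.
Definition add3 a b := match a, b with T0, x => x | x, T0 => x
  | T1, T1 => T2 | T2, T2 => T1 | _, _ => T0 end.
Definition mul3 a b := match a, b with T0, _ => T0 | _, T0 => T0
  | T1, x => x | x, T1 => x | T2, T2 => T1 end.
Definition toF (a : t3) : F3 := match a with T0 => 0 | T1 => 1 | T2 => 1 + 1 end.

Lemma toF_add a b : toF (add3 a b) = toF a + toF b.
Proof. by case: a; case: b; apply/val_inj. Qed.
Lemma toF_mul a b : toF (mul3 a b) = toF a * toF b.
Proof. by case: a; case: b; apply/val_inj. Qed.
Lemma toF0 a : (toF a == 0) = t3_eqb a T0.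
Proof. by case: a. Qed.
Definition ofF (x : F3) : t3 := if x == 0 then T0 else if x == 1 then T1 else T2.
Lemma ofFK x : toF (ofF x) = x.
Proof. by case: x => [[|[|[|]]] //= Hi]; apply/val_inj. Qed.


Fixpoint vadd (s t : seq t3) : seq t3 := match s, t with
 | [::], _ => t | _, [::] => s | a::s', b::t' => add3 a b :: vadd s' t' end.
Definition vscale a (s : seq t3) := map (mul3 a) s.
Fixpoint eipl (s t : seq t3) : t3 := match s, t with
 | a::s', b::t' => add3 (mul3 a b) (eipl s' t') | _, _ => T0 end.
Definition weight (s : seq t3) : nat := count (fun a => ~~ t3_eqb a T0) s.
Definition vf (s : seq t3) (j : nat) : F3 := toF (nth T0 s j).

Lemma vf_add s t j : vf (vadd s t) j = vf s j + vf t j.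
Proof.
elim: s t j => [|a s IH] [|b t] j; rewrite /vf /= ?nth_nil ?add0r ?addr0 //.
case: j => [|j] /=; first exact: toF_add.
exact: IH.
Qed.

Lemma vf_scale a s j : vf (vscale a s) j = toF a * vf s j.
Proof.
rewrite /vf /vscale; case: (ltnP j (size s)) => H.
  by rewrite (nth_map T0) // toF_mul.
by rewrite !nth_default ?size_map //= mulr0.
Qed.

Lemma size_vadd s t : size (vadd s t) = maxn (size s) (size t).
Proof.
elim: s t => [|a s IH] [|b t] //=; rewrite ?maxn0 ?max0n // IH.
by rewrite maxnSS.
Qed.

Lemma vf_nil j : vf [::] j = 0.
Proof. by rewrite /vf nth_nil. Qed.

Lemma eipl_sum n s t : (size s <= n)%N ->
  toF (eipl s t) = \sum_(j < n) vf s j * vf t j.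
Proof.
elim: s t n => [|a s IH] t n Hs.
  by rewrite big1 // => j _; rewrite vf_nil mul0r.
case: n Hs => [|n] //= Hs.
rewrite big_ord_recl; case: t => [|b t] /=.
  by rewrite big1 ?vf_nil ?mulr0 ?addr0 // => j _; rewrite vf_nil mulr0.
by rewrite toF_add toF_mul (IH t n Hs).
Qed.


Fixpoint rec (P : seq t3 -> bool -> bool) (Gs : seq (seq t3)) acc b : bool :=
  match Gs with [::] => P acc b
  | g :: gs => [&& rec P gs acc b, rec P gs (vadd acc g) true
                 & rec P gs (vadd acc (vscale T2 g)) true] end.

Lemma has_iota1 (p : pred nat) m :
  has p (iota 1 m) = has (fun i => p i.+1) (iota 0 m).
Proof. by rewrite -add1n iotaDl has_map. Qed.

Lemma rec_ok P n Gs : all (fun g => size g <= n)%N Gs ->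
  forall acc b, (size acc <= n)%N -> rec P Gs acc b ->
  forall cf : nat -> t3, exists x, [/\ (size x <= n)%N,
    forall j, vf x j = vf acc j + \sum_(i < size Gs) toF (cf i) * vf (nth [::] Gs i) j
  & P x (b || has (fun i => ~~ t3_eqb (cf i) T0) (iota 0 (size Gs)))].
Proof.
elim: Gs => [|g gs IH] /=.
  move=> _ acc b Ha Hr cf; exists acc; split => //; last by rewrite orbF.
  by move=> j; rewrite big_ord0 addr0.
move=> /andP [Hg Hgs] acc b Ha /and3P [H0 H1 H2] cf.
have Hsz : forall s, (size s <= n)%N -> (size (vadd acc s) <= n)%N.
  by move=> s Hs; rewrite size_vadd geq_max Ha.
case Ec: (cf 0%N).
- have [x [Hx Hv HP]] := IH Hgs acc b Ha H0 (fun i => cf i.+1).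
  exists x; split => //; first by move=> j; rewrite big_ord_recl Ec /= mul0r add0r Hv.
  by rewrite has_iota1.
- have [x [Hx Hv HP]] := IH Hgs _ true (Hsz _ Hg) H1 (fun i => cf i.+1).
  exists x; split => //; last by rewrite /= orbT.
  by move=> j; rewrite big_ord_recl Ec /= mul1r Hv vf_add addrA.
- have Hs2 : (size (vscale T2 g) <= n)%N by rewrite size_map.
  have [x [Hx Hv HP]] := IH Hgs _ true (Hsz _ Hs2) H2 (fun i => cf i.+1).
  exists x; split => //; last by rewrite /= orbT.
  by move=> j; rewrite big_ord_recl Ec /= Hv vf_add vf_scale addrA.
Qed.


Lemma count_sum (p : pred t3) x n : p T0 = false -> (size x <= n)%N ->
  count p x = (\sum_(j < n) p (nth T0 x j))%N.
Proof.
move=> p0; elim: x n => [|a x IH] n Hs.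
  by rewrite big1 // => j _; rewrite nth_nil p0.
case: n Hs => [|n] //= Hs.
by rewrite big_ord_recl /= (IH n Hs).
Qed.

Lemma hwt_weight n (X : 'rV[F3]_n) x : (size x <= n)%N ->
  (forall j : 'I_n, X 0 j = vf x j) -> hwt X = weight x.
Proof.
move=> Hs HX; rewrite /hwt /weight (@count_sum _ x n) //.
rewrite -sum1dep_card big_mkcond /=; apply: eq_bigr => j _.
by rewrite HX /vf toF0; case: (t3_eqb _ _).
Qed.


Definition leaf (Gl : seq (seq t3)) (d : nat) (x : seq t3) (b : bool) : bool :=
  ~~ b || ((d <= weight x)%N && has (fun g => ~~ t3_eqb (eipl x g) T0) Gl).

Fixpoint comb (cf : nat -> t3) (Gs : seq (seq t3)) : seq t3 :=
  match Gs with [::] => [::]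
  | g :: gs => vadd (vscale (cf 0%N) g) (comb (fun i => cf i.+1) gs) end.

Lemma comb_ok n cf Gs : all (fun g => size g <= n)%N Gs ->
  (size (comb cf Gs) <= n)%N /\
  forall j, vf (comb cf Gs) j = \sum_(i < size Gs) toF (cf i) * vf (nth [::] Gs i) j.
Proof.
elim: Gs cf => [|g gs IH] cf /=.
  by move=> _; split => // j; rewrite big_ord0 vf_nil.
move=> /andP [Hg Hgs]; have [Hs Hv] := IH (fun i => cf i.+1) Hgs.
split; first by rewrite size_vadd geq_max size_map Hg.
by move=> j; rewrite vf_add vf_scale Hv big_ord_recl.
Qed.

Definition Cmx n (Gl : seq (seq t3)) : 'M[F3]_n := \matrix_(i, j) vf (nth [::] Gl i) j.

Lemma t3_eqbP a : t3_eqb a T0 -> a = T0.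
Proof. by case: a. Qed.

Section Main.
Variables (n k d : nat) (Gl : seq (seq t3)).
Hypotheses (Hk : size Gl = k) (Hkn : (k <= n.+1)%N)
  (Hs : all (fun g => size g <= n.+1)%N Gl) (Hd : (0 < d)%N)
  (Hr : rec (leaf Gl d) Gl [::] false).
Let C := Cmx n.+1 Gl.

Lemma mulC (u : 'rV[F3]_n.+1) j :
  (u *m C) 0 j = \sum_(i < k) u 0 (inord i) * vf (nth [::] Gl i) j.
Proof.
rewrite mxE (big_ord_widen _ (fun i => u 0 (inord i) * vf (nth [::] Gl i) j) Hkn).
rewrite [RHS]big_mkcond /=; apply: eq_bigr => i _; rewrite /C /Cmx mxE.
case: ifP => Hi; first by rewrite inord_val.
by rewrite nth_default ?vf_nil ?mulr0 // Hk leqNgt Hi.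
Qed.

Lemma key (cf : nat -> t3) : exists x, [/\ (size x <= n.+1)%N,
    forall j, vf x j = \sum_(i < k) toF (cf i) * vf (nth [::] Gl i) j
  & leaf Gl d x (has (fun i => ~~ t3_eqb (cf i) T0) (iota 0 k))].
Proof.
have [x [H1 H2 H3]] := rec_ok Hs (isT : (size [::] <= n.+1)%N) Hr cf.
exists x; rewrite -Hk; split => // j.
by rewrite H2 vf_nil add0r.
Qed.

Lemma flag0 (cf : nat -> t3) : ~~ has (fun i => ~~ t3_eqb (cf i) T0) (iota 0 k) ->
  forall j, \sum_(i < k) toF (cf i) * vf (nth [::] Gl i) j = 0.
Proof.
move/hasPn => H j; rewrite big1 // => i _.
have := H i; rewrite mem_iota add0n ltn_ord negbK => /(_ isT) /t3_eqbP ->.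
by rewrite mul0r.
Qed.

Lemma code_form x : in_code C x -> exists cf : nat -> t3,
  forall j, x 0 j = \sum_(i < k) toF (cf i) * vf (nth [::] Gl i) j.
Proof.
case/submxP => u ->; exists (fun i => ofF (u 0 (inord i))) => j.
by rewrite mulC; apply: eq_bigr => i _; rewrite ofFK.
Qed.

Lemma code_zero (x : 'rV[F3]_n.+1) (cf : nat -> t3) : (forall j, x 0 j = \sum_(i < k) toF (cf i) * vf (nth [::] Gl i) j) ->
  ~~ has (fun i => ~~ t3_eqb (cf i) T0) (iota 0 k) -> x = 0.
Proof.
move=> Hx Hf; apply/rowP => j; rewrite Hx flag0 // mxE //.
Qed.

Lemma lcd : eucl_LCD C.
Proof.
move=> x Hx Hdual; have [cf Hcf] := code_form Hx.
have [x' [Hs' Hv' Hl]] := key cf.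
case Hf: (has (fun i => ~~ t3_eqb (cf i) T0) (iota 0 k)); last first.
  by apply: (code_zero Hcf); rewrite Hf.
move: Hl; rewrite /leaf Hf /= => /andP [_]; case/(has_nthP [::]) => i0 Hi0 Hne.
have Hi : (i0 < n.+1)%N by rewrite (leq_trans _ Hkn) // -Hk.
have Hy : in_code C (row (Ordinal Hi) C) by exact: row_sub.
have := Hdual _ Hy; rewrite /eip.
have -> : \sum_(i < n.+1) x 0 i * row (Ordinal Hi) C 0 i = toF (eipl x' (nth [::] Gl i0)).
  rewrite (eipl_sum _ Hs'); apply: eq_bigr => j _.
  by rewrite !mxE Hcf -Hv'.
by move/eqP; rewrite toF0 (negbTE Hne).
Qed.

Lemma hwt0 : hwt (0 : 'rV[F3]_n.+1) = 0%N.
Proof.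
rewrite /hwt; apply/eqP; rewrite cards_eq0; apply/eqP/setP => j.
by rewrite !inE mxE eqxx.
Qed.

Lemma mindist x : in_code C x -> x != 0 -> (d <= hwt x)%N.
Proof.
move=> Hx Hnz; have [cf Hcf] := code_form Hx.
have [x' [Hs' Hv' Hl]] := key cf.
case Hf: (has (fun i => ~~ t3_eqb (cf i) T0) (iota 0 k)); last first.
  by rewrite (code_zero Hcf) ?Hf ?eqxx in Hnz.
move: Hl; rewrite /leaf Hf /= => /andP [Hw _].
by rewrite (@hwt_weight _ x x') // => j; rewrite Hcf Hv'.
Qed.

Lemma witness (cw : nat -> t3) : weight (comb cw Gl) = d ->
  exists2 x, in_code C x & x != 0 /\ hwt x = d.
Proof.
move=> Hw; have [Hs1 Hv1] := comb_ok cw Hs.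
have Hx : forall j, ((\row_i toF (cw i)) *m C) 0 j = vf (comb cw Gl) j.
  move=> j; rewrite mulC Hv1 Hk; apply: eq_bigr => i _.
  by rewrite mxE inordK // (leq_trans (ltn_ord i) Hkn).
have Hh : hwt ((\row_i toF (cw i)) *m C) = d by rewrite (hwt_weight Hs1 Hx).
exists ((\row_i toF (cw i)) *m C); first exact: submxMl.
split => //; apply/eqP => H0; move: Hh; rewrite H0 hwt0 => H.
by move: Hd; rewrite -H.
Qed.

Lemma rankC : \rank C = k.
Proof.
pose D : 'M[F3]_(k, n.+1) := \matrix_(i, j) vf (nth [::] Gl i) j.
have DC : (D <= C)%MS.
  apply/row_subP => i.
  have -> : row i D = row (widen_ord Hkn i) C by apply/rowP => j; rewrite !mxE.
  exact: row_sub.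
have CD : (C <= D)%MS.
  apply/row_subP => i; case: (ltnP i k) => Hi.
    have -> : row i C = row (Ordinal Hi) D by apply/rowP => j; rewrite !mxE.
    exact: row_sub.
  have -> : row i C = 0.
    by apply/rowP => j; rewrite !mxE nth_default ?vf_nil // Hk.
  exact: sub0mx.
have -> : \rank C = \rank D by apply/eqP; rewrite eqn_leq !mxrankS.
apply/eqP; change (row_free D); rewrite -kermx_eq0; apply/rowV0P => v.
move/sub_kermxP => HvD.
pose cf (i : nat) : t3 := if insub i is Some o then ofF (v 0 o) else T0.
have Hcf : forall j, (v *m D) 0 j = \sum_(i < k) toF (cf i) * vf (nth [::] Gl i) j.
  move=> j; rewrite mxE; apply: eq_bigr => i _.
  by rewrite /cf valK ofFK mxE.
have [x' [Hs' Hv' Hl]] := key cf.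
case Hf: (has (fun i => ~~ t3_eqb (cf i) T0) (iota 0 k)).
  move: Hl; rewrite /leaf Hf /= => /andP [Hw _].
  have : hwt (0 : 'rV[F3]_n.+1) = weight x'.
    by apply: hwt_weight => // j; rewrite Hv' -Hcf HvD mxE.
  by rewrite hwt0 => H; move: Hw Hd; rewrite -H leqn0 => /eqP ->.
apply/rowP => i; rewrite mxE.
move/negbT/hasPn: Hf => /(_ i); rewrite mem_iota add0n ltn_ord negbK => /(_ isT).
by rewrite /cf valK => /t3_eqbP H; rewrite -(ofFK (v 0 i)) H.
Qed.

Lemma main (cw : nat -> t3) : weight (comb cw Gl) = d ->
  is_code_nkd k d C /\ eucl_LCD C.
Proof.
move=> Hw; split; last exact: lcd.
split; first exact: rankC.
split; first exact: witness Hw.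
exact: mindist.
Qed.
End Main.

Definition G1 : seq (seq t3) :=
  [:: [:: T1; T0; T0; T0; T0; T0; T0; T2; T2; T0; T1; T0; T1; T1; T1; T2; T1; T1; T1; T1];
    [:: T0; T1; T0; T0; T0; T0; T0; T0; T1; T1; T1; T0; T2; T1; T1; T2; T0; T2; T0; T1];
    [:: T0; T0; T1; T0; T0; T0; T0; T0; T2; T0; T2; T2; T0; T2; T2; T0; T1; T2; T0; T1];
    [:: T0; T0; T0; T1; T0; T0; T0; T1; T1; T1; T2; T1; T1; T0; T1; T0; T1; T1; T0; T1];
    [:: T0; T0; T0; T0; T1; T0; T0; T2; T2; T0; T0; T2; T2; T1; T0; T1; T2; T2; T2; T0];
    [:: T0; T0; T0; T0; T0; T1; T0; T1; T0; T2; T0; T0; T2; T2; T0; T2; T2; T2; T1; T1];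
    [:: T0; T0; T0; T0; T0; T0; T1; T2; T1; T0; T1; T2; T0; T1; T2; T1; T1; T2; T1; T2]].
Definition G2 : seq (seq t3) :=
  [:: [:: T2; T2; T0; T2; T2; T1; T2; T0; T1; T0; T0; T0; T0; T0; T0; T0; T0; T0; T0; T0];
    [:: T1; T0; T1; T1; T0; T2; T1; T2; T0; T1; T0; T0; T0; T0; T0; T0; T0; T0; T0; T0];
    [:: T0; T0; T1; T2; T2; T0; T1; T2; T0; T0; T1; T0; T0; T0; T0; T0; T0; T0; T0; T0];
    [:: T1; T0; T0; T0; T1; T2; T2; T2; T0; T0; T0; T1; T0; T0; T0; T0; T0; T0; T0; T0];
    [:: T0; T0; T1; T1; T1; T1; T1; T0; T0; T0; T0; T0; T1; T0; T0; T0; T0; T0; T0; T0];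
    [:: T1; T2; T2; T0; T1; T0; T2; T0; T0; T0; T0; T0; T0; T1; T0; T0; T0; T0; T0; T0];
    [:: T0; T2; T2; T0; T2; T0; T1; T1; T0; T0; T0; T0; T0; T0; T1; T0; T0; T0; T0; T0];
    [:: T2; T0; T2; T0; T1; T2; T1; T0; T0; T0; T0; T0; T0; T0; T0; T1; T0; T0; T0; T0];
    [:: T1; T1; T2; T1; T1; T1; T2; T2; T0; T0; T0; T0; T0; T0; T0; T0; T1; T0; T0; T0];
    [:: T2; T1; T0; T1; T2; T2; T2; T1; T0; T0; T0; T0; T0; T0; T0; T0; T0; T1; T0; T0];
    [:: T1; T2; T2; T1; T0; T1; T1; T0; T0; T0; T0; T0; T0; T0; T0; T0; T0; T0; T1; T0];
    [:: T2; T1; T0; T0; T0; T1; T2; T2; T0; T0; T0; T0; T0; T0; T0; T0; T0; T0; T0; T1]].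
Definition cw1 (i : nat) : t3 := nth T0 [:: T0; T0; T0; T0; T1; T0; T2] i.
Definition cw2 (i : nat) : t3 := nth T0 [:: T0; T0; T0; T0; T0; T0; T0; T0; T0; T0; T0; T1] i.

Theorem proposition5p5 :
  (exists C : 'M[F3]_20, is_code_nkd 7%N 9%N C /\ eucl_LCD C) /\
  (exists C : 'M[F3]_20, is_code_nkd 12%N 6%N C /\ eucl_LCD C).
Proof.
split.
  exists (Cmx 20 G1).
  apply: (@main 19 7 9 G1 erefl isT isT isT _ cw1 erefl).
  by vm_compute.
exists (Cmx 20 G2).
apply: (@main 19 12 6 G2 erefl isT isT isT _ cw2 erefl).
by vm_compute.
Qed.
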